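(* Let $E\subset\mathbb{R}^2$ be a compact, path connected set, let $r>0$, and let $\Gamma^\ast$ be an $r$-maximum distance minimizer of $B(E,r)$. Let $x_0,x_1\in\Gamma^\ast\cap B(E,2r)$. Then there exist $N\ge1$ and points $x_2,\dots,x_N\in\Gamma^\ast\cap B(E,2r)$ such that $|x_j-x_{j+1}|\le4r$ for $j=1,\dots,N$, where $x_{N+1}:=x_0$.
   Context: For $A\subset\mathbb{R}^2$ and $r>0$, $B(A,r):=\{x:\mathrm{dist}(x,A)\le r\}$. A rectifiable curve is the image of a Lipschitz map $[0,1]\to\mathbb{R}^2$. $\Lambda(K,r):=\inf\{\mathcal{H}^1(\Gamma):\Gamma \text{ a rectifiable curve with } B(\Gamma,r)\supset K\}$. An $r$-maximum distance minimizer of $K$ is a rectifiable curve $\Gamma$ with $B(\Gamma,r)\supset K$ and $\mathcal{H}^1(\Gamma)=\Lambda(K,r)$. *)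

(* Defs.v *)
(* R : realType, points of R^2 as pairs R * R
   (product topology = Euclidean topology). *)
From HB Require Import structures.
From mathcomp Require Import all_boot all_order all_algebra.
From mathcomp Require Import all_classical all_reals all_analysis.
Set Implicit Arguments. Unset Strict Implicit. Unset Printing Implicit Defensive.
Import Order.TTheory GRing.Theory Num.Theory.
Import numFieldNormedType.Exports.
Local Open Scope classical_set_scope.
Local Open Scope ring_scope.

Section Defs.
Variable R : realType.

Definition eucl_dist (p q : R * R) : R :=
  Num.sqrt ((p.1 - q.1) ^+ 2 + (p.2 - q.2) ^+ 2).

(* dist(x, A) as an extended real (= +oo for A empty) *)
Definition dist_set (x : R * R) (A : set (R * R)) : \bar R :=
  ereal_inf [set (eucl_dist x a)%:E | a in A].

Definition Bnbhd (A : set (R * R)) (r : R) : set (R * R) :=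
  [set x | (dist_set x A <= r%:E)%E].

(* rectifiable curve: image of a Lipschitz map [0,1] -> R^2 *)
Definition rectifiable_curve (G : set (R * R)) : Prop :=
  exists (g : R -> R * R) (L : R),
    (forall s t, s \in `[0, 1] -> t \in `[0, 1] ->
        eucl_dist (g s) (g t) <= L * `|s - t|) /\
    G = g @` `[0, 1].

(* diameter (diam of the empty set is 0) *)
Definition diam (C : set (R * R)) : \bar R :=
  ereal_sup ([set e | exists x y, C x /\ C y /\ e = (eucl_dist x y)%:E] `|` [set 0%E]).

Definition H1delta (A : set (R * R)) (d : R) : \bar R :=
  ereal_inf [set s | exists C : nat -> set (R * R),
     A `<=` \bigcup_i C i /\ (forall i, (diam (C i) <= d%:E)%E) /\
     s = (\sum_(0 <= i <oo) diam (C i))%E].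

Definition H1 (A : set (R * R)) : \bar R :=
  ereal_sup [set H1delta A d | d in [set d : R | 0 < d]].

Definition Lambda (K : set (R * R)) (r : R) : \bar R :=
  ereal_inf [set H1 G | G in [set G | rectifiable_curve G /\ K `<=` Bnbhd G r]].

Definition max_dist_minimizer (K : set (R * R)) (r : R) (G : set (R * R)) : Prop :=
  rectifiable_curve G /\ K `<=` Bnbhd G r /\ H1 G = Lambda K r.

Definition path_connected_set (E : set (R * R)) : Prop :=
  forall x y, E x -> E y ->
    exists g : R -> R * R, {within `[0, 1]%classic, continuous g} /\
      g 0 = x /\ g 1 = y /\ g @` `[0, 1] `<=` E.

End Defs.

(* Main.v *)
Require Import Defs.
From HB Require Import structures.
From mathcomp Require Import all_boot all_order all_algebra.
From mathcomp Require Import all_classical all_reals all_analysis.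
From mathcomp Require Import lra zify.
Import Order.TTheory GRing.Theory Num.Theory.
Import numFieldNormedType.Exports.
Local Open Scope classical_set_scope.
Local Open Scope ring_scope.
Set Implicit Arguments. Unset Strict Implicit.
Section H.
Variable R : realType.
Implicit Types p q w : R * R.

Lemma ed_ge0 p q : 0 <= eucl_dist p q.
Proof. exact: sqrtr_ge0. Qed.

Lemma ed_sym p q : eucl_dist p q = eucl_dist q p.
Proof. by rewrite /eucl_dist -(opprB p.1) -(opprB p.2) !sqrrN. Qed.

Lemma ed_refl p : eucl_dist p p = 0.
Proof. by rewrite /eucl_dist !subrr expr0n /= addr0 sqrtr0. Qed.

Lemma dot_le (u1 u2 v1 v2 : R) :
  u1 * v1 + u2 * v2 <= Num.sqrt (u1^+2 + u2^+2) * Num.sqrt (v1^+2 + v2^+2).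
Proof.
rewrite -sqrtrM; last by rewrite addr_ge0 // sqr_ge0.
have [h|h] := lerP (u1 * v1 + u2 * v2) 0.
  by apply: le_trans h (sqrtr_ge0 _).
rewrite -(ger0_norm (ltW h)) -sqrtr_sqr ler_sqrt; last first.
  by rewrite mulr_ge0 // addr_ge0 // sqr_ge0.
have : 0 <= (u1 * v2 - u2 * v1) ^+ 2 by rewrite sqr_ge0.
move=> H. nra.
Qed.

Lemma ed_tri p q w : eucl_dist p w <= eucl_dist p q + eucl_dist q w.
Proof.
rewrite /eucl_dist.
set a := Num.sqrt ((p.1 - q.1) ^+ 2 + _). set b := Num.sqrt ((q.1 - w.1) ^+ 2 + _).
have a0 : 0 <= a by exact: sqrtr_ge0.
have b0 : 0 <= b by exact: sqrtr_ge0.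
have ha : a ^+ 2 = (p.1 - q.1) ^+ 2 + (p.2 - q.2) ^+ 2 by rewrite /a /b sqr_sqrtr // addr_ge0 // sqr_ge0.
have hb : b ^+ 2 = (q.1 - w.1) ^+ 2 + (q.2 - w.2) ^+ 2 by rewrite /a /b sqr_sqrtr // addr_ge0 // sqr_ge0.
have hd := dot_le (p.1 - q.1) (p.2 - q.2) (q.1 - w.1) (q.2 - w.2).
rewrite -/a -/b in hd.
rewrite -(ger0_norm (addr_ge0 a0 b0)) -sqrtr_sqr ler_sqrt; last by rewrite sqr_ge0.
have -> : p.1 - w.1 = (p.1 - q.1) + (q.1 - w.1) by rewrite addrA subrK.
have -> : p.2 - w.2 = (p.2 - q.2) + (q.2 - w.2) by rewrite addrA subrK.
nra.
Qed.

Lemma ed_small p q (e : R) : 0 < e -> `|p.1 - q.1| < e -> `|p.2 - q.2| < e ->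
  eucl_dist p q < 2 * e.
Proof.
move=> e0 h1 h2.
rewrite /eucl_dist -(ger0_norm (ltW (mulr_gt0 (ltr0n _ 2) e0))) -sqrtr_sqr ltr_sqrt; last first.
  by rewrite exprn_gt0 // mulr_gt0.
rewrite -(real_normK (num_real (p.1 - q.1))) -(real_normK (num_real (p.2 - q.2))).
have n1 := normr_ge0 (p.1 - q.1). have n2 := normr_ge0 (p.2 - q.2).
nra.
Qed.

Lemma dist_set_approx x A (c e : R) : (dist_set x A <= c%:E)%E -> 0 < e ->
  exists a, A a /\ eucl_dist x a < c + e.
Proof.
move=> h e0.
have : (dist_set x A < (c + e)%:E)%E.
  apply: le_lt_trans h _; rewrite lte_fin; lra.
move=> /ereal_inf_lt [y [a Aa <-]]; rewrite lte_fin => H.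
by exists a.
Qed.

Lemma dist_set_le x A a (c : R) : A a -> eucl_dist x a <= c -> (dist_set x A <= c%:E)%E.
Proof.
move=> Aa h; apply: le_trans (_ : ((eucl_dist x a)%:E <= _)%E); last by rewrite lee_fin.
by apply: ereal_inf_lbound; exists a.
Qed.
Lemma real_ind (P : R -> Prop) : P 0 ->
  (forall s, 0 <= s <= 1 -> exists2 d, 0 < d & forall t u, 0 <= t <= 1 -> 0 <= u <= 1 ->
      `|t - s| < d -> `|u - s| < d -> P t -> P u) -> P 1.
Proof.
move=> P0 loc.
pose S := [set t : R | 0 <= t <= 1 /\ forall u, 0 <= u <= t -> P u].
have S0 : S 0.
  split; first by rewrite lexx ler01.
  by move=> u /andP[h1 h2]; have -> : u = 0 by apply/eqP; rewrite eq_le h1 h2.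
have hs : has_sup S.
  split; first by exists 0.
  by exists 1 => t [/andP[_ ->]].
set c := sup S.
have c0 : 0 <= c by apply: sup_upper_bound.
have c1 : c <= 1 by apply: ge_sup; [exists 0 | move=> t [/andP[_ ->]]].
have [d d0 hd] := loc c (ltac:(by rewrite c0 c1)).
have [t St ht] := sup_adherent d0 hs.
rewrite -/c in ht.
have tc : t <= c by apply: sup_upper_bound.
have [t01 Pt] := St.
have /andP[t0 t1] := t01.
have Ptt : P t by apply: Pt; rewrite (andP t01).1 lexx.
have key : forall u, 0 <= u <= 1 -> t <= u -> u < c + d -> P u.
  move=> u u01 tu uc.
  have /andP[u0 u1] := u01.
  apply: (hd t u t01 u01) => //.
    by rewrite ltr_distl; apply/andP; split; lra.
  by rewrite ltr_distl; apply/andP; split; lra.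
have [h1|h1] := lerP 1 (c + d / 2).
  apply: key; [by rewrite ler01 lexx | by case/andP: t01 | lra].
have Sm : S (c + d / 2).
  split; first by apply/andP; split; lra.
  move=> u /andP[u0 um].
  have [ut|tu] := lerP u t; first by apply: Pt; rewrite u0 ut.
  by apply: key; [apply/andP; split; lra | lra | lra].
have := sup_upper_bound hs Sm. rewrite -/c. lra.
Qed.

Definition Reach (G B : set (R * R)) (x1 : R * R) (r : R) (z : R * R) :=
  exists (N : nat) (x : nat -> R * R),
    (1 <= N)%N /\ x 1%N = x1 /\ x N.+1 = z /\
    (forall j, (2 <= j <= N)%N -> G (x j) /\ B (x j)) /\
    (forall j, (1 <= j <= N)%N -> eucl_dist (x j) (x j.+1) <= 4 * r).

Lemma Reach_base G B x1 r z : eucl_dist x1 z <= 4 * r -> Reach G B x1 r z.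
Proof.
move=> h; exists 1%N, (fun j => if j == 2%N then z else x1).
split=> //; split=> //; split=> //; split.
  by move=> j /andP[h1 h2]; exfalso; lia.
move=> j /andP[h1 h2]; have -> : j = 1%N by lia.
by [].
Qed.

Lemma Reach_ext G B x1 r y z : Reach G B x1 r y -> G y -> B y ->
  eucl_dist y z <= 4 * r -> Reach G B x1 r z.
Proof.
move=> [N [x [N1 [hx1 [hxN [hI hD]]]]]] Gy By hyz.
exists N.+1, (fun j => if j == N.+2 then z else x j).
split; first by lia.
split; first by [].
split; first by rewrite eqxx.
split.
  move=> j /andP[h1 h2].
  have -> : (j == N.+2) = false by apply/eqP; lia.
  have [->|jN] := eqVneq j N.+1; first by rewrite hxN.
  by apply: hI; apply/andP; split; lia.
move=> j /andP[h1 h2].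
have -> : (j == N.+2) = false by apply/eqP; lia.
have [->|jN] := eqVneq j N.+1; first by rewrite eqxx hxN.
have -> : (j.+1 == N.+2) = false by apply/eqP; lia.
by apply: hD; apply/andP; split; lia.
Qed.
End H.

Lemma contx (R : realType) (g : R -> R * R) (A : set R) s (e : R) :
  {within A, continuous g} -> A s -> 0 < e ->
  exists2 d : R, 0 < d & forall t, A t -> `|t - s| < d ->
     `|(g t).1 - (g s).1| < e /\ `|(g t).2 - (g s).2| < e.
Proof.
move=> gc As e0.
have hb : nbhs (g s) (ball (g s) e) by apply: nbhsx_ballx.
have := gc s _ hb.
have E := nbhs_subspace_in As.
move=> H.
have : (within A (nbhs s)) [set t | ball (g s) e (g t)].
  rewrite E. move: H. rewrite /from_subspace /=. exact.
rewrite /within /=; move=> /nbhs_ballP [d d0 hd].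
exists d => // t At ts.
have : ball s d t by rewrite /ball /= distrC.
move=> /hd /(_ At) [] /=.
rewrite /ball /= => h1 h2.
by split; rewrite distrC.
Qed.


Unset Implicit Arguments. Set Strict Implicit.
Theorem lemma4p3 (R : realType) (E : set (R * R)) (r : R) (G : set (R * R))
  (x0 x1 : R * R) :
  compact E -> path_connected_set E -> 0 < r ->
  max_dist_minimizer (Bnbhd E r) r G ->
  G x0 -> Bnbhd E (2 * r) x0 -> G x1 -> Bnbhd E (2 * r) x1 ->
  exists (N : nat) (x : nat -> R * R),
    (1 <= N)%N /\ x 1%N = x1 /\ x N.+1 = x0 /\
    (forall j, (2 <= j <= N)%N -> G (x j) /\ Bnbhd E (2 * r) (x j)) /\
    (forall j, (1 <= j <= N)%N -> eucl_dist (x j) (x j.+1) <= 4 * r).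
Proof.
move=> _ pcE r0 [_ [KG _]] Gx0 Bx0 Gx1 Bx1.
suff : Reach G (Bnbhd E (2 * r)) x1 r x0 by [].
have r2 : 0 < r / 2 by lra.
have r4 : 0 < r / 4 by lra.
have [e1 [Ee1 d1]] := dist_set_approx Bx1 r2.
have [e0 [Ee0 d0]] := dist_set_approx Bx0 r2.
have [g [gc [g0 [g1 gE]]]] := pcE e1 e0 Ee1 Ee0.
have inA : forall t : R, 0 <= t <= 1 -> `[0, 1]%classic t.
  by move=> t h; rewrite /= in_itv /=.
have near : forall t, 0 <= t <= 1 -> exists h, G h /\ eucl_dist (g t) h < r + r / 4.
  move=> t t01.
  have Et : E (g t) by apply: gE; exists t => //; apply: inA.
  have : Bnbhd E r (g t).
    by apply: (dist_set_le Et); rewrite ed_refl ltW.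
  move/KG => /dist_set_approx /(_ r4) [h [Gh dh]].
  by exists h.
have hB : forall t h, 0 <= t <= 1 -> eucl_dist (g t) h < r + r / 4 ->
    Bnbhd E (2 * r) h.
  move=> t h t01 dh.
  have Et : E (g t) by apply: gE; exists t => //; apply: inA.
  by apply: (dist_set_le Et); rewrite ed_sym; lra.
pose I t := exists h, G h /\ eucl_dist (g t) h < r + r / 4 /\
   Reach G (Bnbhd E (2 * r)) x1 r h.
have I0 : I 0.
  have [h [Gh dh]] := near 0 (ltac:(by rewrite lexx ler01)).
  exists h; split => //; split => //.
  apply: Reach_base.
  have := ed_tri x1 e1 h. rewrite g0 in dh. lra.
have I1 : I 1.
  apply: (real_ind (P:=I) I0) => s s01.
  have [d d0' hd] := contx gc (inA s s01) (ltac:(lra) : 0 < r / 8).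
  exists d => // t u t01 u01 ts us [ht [Ght [dht Rt]]].
  have [hu [Ghu dhu]] := near u u01.
  exists hu; split => //; split => //.
  apply: (Reach_ext Rt Ght (hB t ht t01 dht)).
  have [a1 a2] := hd t (inA t t01) ts.
  have [b1 b2] := hd u (inA u u01) us.
  have r8 : 0 < r / 8 by lra.
  have c1 := ed_small r8 a1 a2.
  have c2 := ed_small r8 b1 b2.
  rewrite ed_sym in c2.
  have := ed_tri ht (g t) hu. have := ed_tri (g t) (g s) hu.
  have := ed_tri (g s) (g u) hu.
  rewrite ed_sym in dht. lra.
have [h [Gh [dh Rh]]] := I1.
apply: (Reach_ext Rh Gh (hB 1 h (ltac:(by rewrite ler01 lexx)) dh)).
have := ed_tri h e0 x0. rewrite g1 ed_sym in dh. rewrite ed_sym in d0. lra.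
Qed.
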